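(* Let $\eta>0$ and let $\lambda$ be an $\eta$-mixable loss function. Then $\lambda$ is proper if and only if for each $\pi\in(0,1)$ the superprediction set $\Sigma_\lambda$ lies to the Northeast of the shift of the curve $e^{-\eta x}+e^{-\eta y}=1$ that passes through $\Lambda_\pi:=(\lambda(\pi,0),\lambda(\pi,1))$ and has $\Lambda_\pi$ as its $\pi$-point.
   Context: A loss function is a map $\lambda:[0,1]\times\{0,1\}\to[0,\infty]$ satisfying: (1) $\lambda(\gamma,0)$, $\lambda(\gamma,1)$ continuous in $\gamma\in[0,1]$ (standard topology on $[0,\infty]$); (2) some $\gamma$ has both values finite; (3) no $\gamma$ has both values infinite. Superprediction set: $\Sigma_\lambda=\{(x,y)\in[0,\infty)^2:\exists\gamma\ \lambda(\gamma,0)\le x,\ \lambda(\gamma,1)\le y\}$. $\lambda$ is $\eta$-mixable if $\{(e^{-\eta x},e^{-\eta y}):(x,y)\in\Sigma_\lambda\}$ is convex; proper if $\pi\lambda(\pi,1)+(1-\pi)\lambda(\pi,0)\le\pi\lambda(\pi',1)+(1-\pi)\lambda(\pi',0)$ for all $\pi,\pi'\in[0,1]$. For $\pi\in(0,1)$, the $\pi$-point of the curve $e^{-\eta x}+e^{-\eta y}=1$ is $\bigl(-\frac1\eta\ln(1-\pi),-\frac1\eta\ln\pi\bigr)$. A shift of this curve is the curve $e^{-\eta(x-\alpha)}+e^{-\eta(y-\beta)}=1$ for some $(\alpha,\beta)\in\mathbb{R}^2$; its $\pi$-point is $(\alpha,\beta)$ plus the $\pi$-point of the original curve. A point $(x_1,y_1)$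 is Northeast of $(x_2,y_2)$ if $x_1\ge x_2$ and $y_1\ge y_2$; a set $A\subseteq\mathbb{R}^2$ lies to the Northeast of a shift if every point of $A$ is Northeast of some point of the shift. *)

(* Defs.v *)
From HB Require Import structures.
From mathcomp Require Import all_boot all_order all_algebra.
From mathcomp Require Import all_classical all_reals all_analysis.
Set Implicit Arguments. Unset Strict Implicit. Unset Printing Implicit Defensive.
Import Order.TTheory GRing.Theory Num.Theory numFieldNormedType.Exports.
Local Open Scope classical_set_scope.
Local Open Scope ring_scope.

(* Outcomes {0,1} are encoded as bool: false = 0, true = 1.
   A prediction gamma ranges over R, but only gamma in [0,1] matter. *)
Section Loss.
Variable R : realType.

Definition unit_interval : set R := [set g | 0 <= g <= 1].

Definition is_loss (lam : R -> bool -> \bar R) : Prop :=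
  (forall g b, unit_interval g -> (0 <= lam g b)%E) /\
  {within unit_interval, continuous (fun g => lam g false)} /\
  {within unit_interval, continuous (fun g => lam g true)} /\
  (exists g, unit_interval g /\ lam g false \is a fin_num /\ lam g true \is a fin_num) /\
  (forall g, unit_interval g -> ~ (lam g false = +oo%E /\ lam g true = +oo%E)).

Definition superprediction (lam : R -> bool -> \bar R) : set (R * R) :=
  [set p | 0 <= p.1 /\ 0 <= p.2 /\
    exists g, unit_interval g /\ (lam g false <= p.1%:E)%E /\ (lam g true <= p.2%:E)%E].

Definition convex_set2 (A : set (R * R)) : Prop :=
  forall u v t, A u -> A v -> 0 <= t <= 1 ->
    A (t * u.1 + (1 - t) * v.1, t * u.2 + (1 - t) * v.2).

Definition mixable (eta : R) (lam : R -> bool -> \bar R) : Prop :=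
  convex_set2 [set q | exists2 p, superprediction lam p &
                         q = (expR (- eta * p.1), expR (- eta * p.2))].

Definition proper_loss (lam : R -> bool -> \bar R) : Prop :=
  forall pi pi', unit_interval pi -> unit_interval pi' ->
    (pi%:E * lam pi true + (1 - pi)%:E * lam pi false
      <= pi%:E * lam pi' true + (1 - pi)%:E * lam pi' false)%E.

Definition shifted_curve (eta alpha beta : R) : set (R * R) :=
  [set p | expR (- eta * (p.1 - alpha)) + expR (- eta * (p.2 - beta)) = 1].

Definition pi_point (eta pi : R) : R * R :=
  (- eta^-1 * ln (1 - pi), - eta^-1 * ln pi).

Definition northeast (p q : R * R) : Prop := q.1 <= p.1 /\ q.2 <= p.2.

Definition lies_northeast (A C : set (R * R)) : Prop :=
  forall p, A p -> exists2 q, C q & northeast p q.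

End Loss.

(* Main.v *)
Require Import Defs.
From HB Require Import structures.
From mathcomp Require Import all_boot all_order all_algebra.
From mathcomp Require Import all_classical all_reals all_analysis.
From mathcomp Require Import ring lra.
Import Order.TTheory GRing.Theory Num.Theory numFieldNormedType.Exports.
Local Open Scope classical_set_scope.
Local Open Scope ring_scope.

Section H.
Variable R : realType.
Implicit Types (f g : R -> \bar R).

Definition NP f := forall x (P : set (\bar R)), (@unit_interval R) x -> open P -> P (f x) ->
  exists2 d : R, 0 < d & forall y, `|x - y| < d -> (@unit_interval R) y -> P (f y).

Lemma cont_NP f : {within (@unit_interval R), continuous f} -> NP f.
Proof.
move=> /subspace_continuousP hc x P ux oP Pfx.
have := hc x ux P (open_nbhs_nbhs (conj oP Pfx)).
rewrite /within /= => /nbhs_ballP [d d0 H]; exists d => // y xy uy.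
Qed.

Lemma NP_flip f : NP f -> NP (fun x => f (1 - x)).
Proof.
move=> h x P ux oP Pfx.
have ux' : (@unit_interval R) (1 - x) by move: ux; rewrite /unit_interval /= => /andP[? ?]; apply/andP; split; lra.
have [d d0 H] := h _ P ux' oP Pfx.
exists d => // y xy uy; apply: H.
  have -> : 1 - x - (1 - y) = - (x - y) by ring.
  by rewrite normrN.
by move: uy; rewrite /unit_interval /= => /andP[? ?]; apply/andP; split; lra.
Qed.

Lemma between (r : R) (b : \bar R) : (r%:E < b)%E -> exists c, r < c /\ (c%:E < b)%E.
Proof.
case: b => [s| |] //=.
- rewrite lte_fin => rs; exists ((r + s) / 2); split; rewrite ?lte_fin; lra.
- by move=> _; exists (r + 1); split; [lra | exact: ltry].
Qed.

Lemma curve_of (eta alpha beta : R) (p : R * R) : 0 < eta ->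
  expR (- eta * (p.1 - alpha)) + expR (- eta * (p.2 - beta)) <= 1 ->
  exists2 q, shifted_curve eta alpha beta q & northeast p q.
Proof.
move=> eta0 hs.
set E1 := expR (- eta * (p.1 - alpha)) in hs.
set E2 := expR (- eta * (p.2 - beta)) in hs.
have E20 : 0 < E2 by apply: expR_gt0.
have pos : 0 < 1 - E1 by lra.
exists (p.1, beta - ln (1 - E1) / eta).
  rewrite /shifted_curve /=.
  have -> : - eta * (beta - ln (1 - E1) / eta - beta) = ln (1 - E1).
    by field; rewrite gt_eqF.
  have /eqP -> : expR (ln (1 - E1)) == 1 - E1 by rewrite lnK_eq.
  rewrite /E1; lra.
split => //=.
have : E2 <= expR (ln (1 - E1)).
  have /eqP -> : expR (ln (1 - E1)) == 1 - E1 by rewrite lnK_eq.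
  lra.
rewrite /E2 ler_expR => h.
have h2 : ln (1 - E1) = - eta * ((beta - ln (1 - E1) / eta) - beta).
  by field; rewrite gt_eqF.
rewrite h2 in h.
nra.
Qed.

Lemma curve_S (eta alpha beta : R) (p q : R * R) : 0 < eta ->
  shifted_curve eta alpha beta q -> northeast p q ->
  expR (- eta * (p.1 - alpha)) + expR (- eta * (p.2 - beta)) <= 1.
Proof.
move=> eta0; rewrite /shifted_curve /northeast /= => hq [h1 h2].
rewrite -hq; apply: lerD; rewrite ler_expR; nra.
Qed.

Lemma jensen (pi A B : R) : 0 <= pi <= 1 ->
  (1 - pi) * expR A + pi * expR B <= 1 -> (1 - pi) * A + pi * B <= 0.
Proof.
move=> /andP[p0 p1] h.
have hA := expR_ge1Dx A; have hB := expR_ge1Dx B.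
have h1 : (1 - pi) * (1 + A) <= (1 - pi) * expR A by apply: ler_wpM2l; lra.
have h2 : pi * (1 + B) <= pi * expR B by apply: ler_wpM2l.
nra.
Qed.

Lemma exp_alpha (eta pi x0 z : R) : 0 < eta -> 0 < pi < 1 ->
  expR (- eta * (z - (x0 - (pi_point eta pi).1))) = (1 - pi) * expR (- eta * (z - x0)).
Proof.
move=> eta0 /andP[p0 p1]; rewrite /pi_point /=.
have -> : - eta * (z - (x0 - - eta^-1 * ln (1 - pi))) = - eta * (z - x0) + ln (1 - pi).
  by field; rewrite gt_eqF.
rewrite expRD mulrC; congr (_ * _); apply/eqP; rewrite lnK_eq; lra.
Qed.

Lemma exp_beta (eta pi y0 z : R) : 0 < eta -> 0 < pi < 1 ->
  expR (- eta * (z - (y0 - (pi_point eta pi).2))) = pi * expR (- eta * (z - y0)).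
Proof.
move=> eta0 /andP[p0 p1]; rewrite /pi_point /=.
have -> : - eta * (z - (y0 - - eta^-1 * ln pi)) = - eta * (z - y0) + ln pi.
  by field; rewrite gt_eqF.
rewrite expRD mulrC; congr (_ * _); apply/eqP; rewrite lnK_eq; lra.
Qed.


Lemma wsum_infty (pi : R) (a b : \bar R) : 0 < pi < 1 -> (0 <= a)%E -> (0 <= b)%E ->
  (a = +oo%E \/ b = +oo%E) -> (pi%:E * a + (1 - pi)%:E * b = +oo)%E.
Proof.
move=> /andP[p0 p1] a0 b0 [->|->].
- rewrite gt0_muley ?lte_fin // addye //.
  have : (0 <= (1 - pi)%:E * b)%E by apply: mule_ge0; rewrite // lee_fin; lra.
  by case: (_ * _)%E.
- rewrite (gt0_muley (x := (1 - pi)%:E)) ?lte_fin; last lra.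
  rewrite addeC addye //.
  have : (0 <= pi%:E * a)%E by apply: mule_ge0; rewrite // lee_fin; lra.
  by case: (_ * _)%E.
Qed.

Lemma fwd_core (eta : R) (lam : R -> bool -> \bar R) (pi x0 y0 : R) :
  0 < eta -> 0 < pi < 1 -> proper_loss lam -> mixable eta lam ->
  lam pi false = x0%:E -> lam pi true = y0%:E -> 0 <= x0 -> 0 <= y0 ->
  forall p, superprediction lam p ->
  (1 - pi) * expR (- eta * (p.1 - x0)) + pi * expR (- eta * (p.2 - y0)) <= 1.
Proof.
move=> eta0 hpi Hprop Hmix hx0 hy0 x00 y00 p Sp.
have /andP[p0 p1] := hpi.
rewrite leNgt; apply/negP => hS.
set s1 := expR (- eta * (p.1 - x0)) in hS.
set s2 := expR (- eta * (p.2 - y0)) in hS.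
have s10 : 0 < s1 by apply: expR_gt0.
have s20 : 0 < s2 by apply: expR_gt0.
set a := s1 - 1; set b := s2 - 1.
set c := (1 - pi) * a + pi * b.
have c0 : 0 < c by rewrite /c /a /b; lra.
set k := `|a * b|.
have k0 : 0 <= k by apply: normr_ge0.
set t := c / (c + 2 * k).
have ck0 : 0 < c + 2 * k by lra.
have t0 : 0 < t by apply: divr_gt0.
have tk : t * c + 2 * (t * k) = c.
  by rewrite /t; field; rewrite gt_eqF.
have t1 : t <= 1.
  have : t * (2 * k) >= 0 by apply: mulr_ge0; lra.
  nra.
have hab : - k <= a * b.
  have := real_ler_norm (num_real (- (a * b))).
  by rewrite normrN -/k; lra.
have htab : - (t * k) <= t * (a * b).
  by rewrite -mulrN; apply: ler_wpM2l; lra.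
have tc0 : 0 < t * c by apply: mulr_gt0.
have hmain : 0 < c + t * (a * b) by lra.
have Sp0 : superprediction lam (x0, y0).
  split => //; split => //; exists pi; split.
    by rewrite /unit_interval /=; apply/andP; split; lra.
  by rewrite hx0 hy0.
have ht01 : 0 <= t <= 1 by apply/andP; split; lra.
have [p' Sp' [e1 e2]] := Hmix (expR (- eta * p.1), expR (- eta * p.2))
   (expR (- eta * x0), expR (- eta * y0)) t
   (ex_intro2 _ _ p Sp erefl) (ex_intro2 _ _ (x0, y0) Sp0 erefl) ht01.
rewrite /= in e1 e2.
set X := eta * (x0 - p'.1).
set Y := eta * (y0 - p'.2).
have u0 : expR (- eta * x0) != 0 by rewrite gt_eqF // expR_gt0.
have v0 : expR (- eta * y0) != 0 by rewrite gt_eqF // expR_gt0.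
have eX : expR X = 1 + t * a.
  apply: (mulIf u0); rewrite -expRD.
  have -> : X + - eta * x0 = - eta * p'.1 by rewrite /X; ring.
  rewrite -e1.
  have -> : expR (- eta * p.1) = s1 * expR (- eta * x0).
    by rewrite /s1 -expRD; congr expR; ring.
  rewrite /a; ring.
have eY : expR Y = 1 + t * b.
  apply: (mulIf v0); rewrite -expRD.
  have -> : Y + - eta * y0 = - eta * p'.2 by rewrite /Y; ring.
  rewrite -e2.
  have -> : expR (- eta * p.2) = s2 * expR (- eta * y0).
    by rewrite /s2 -expRD; congr expR; ring.
  rewrite /b; ring.
have A0 : 0 < 1 + t * a.
  have : t * a = t * s1 - t by rewrite /a; ring.
  have : 0 < t * s1 by apply: mulr_gt0.
  lra.
have B0 : 0 < 1 + t * b.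
  have : t * b = t * s2 - t by rewrite /b; ring.
  have : 0 < t * s2 by apply: mulr_gt0.
  lra.
have hX : t * a <= (1 + t * a) * X.
  have h := expR_ge1Dx (- X).
  rewrite expRN eX in h.
  have := ler_wpM2l (ltW A0) h.
  rewrite mulfV ?gt_eqF //.
  nra.
have hY : t * b <= (1 + t * b) * Y.
  have h := expR_ge1Dx (- Y).
  rewrite expRN eY in h.
  have := ler_wpM2l (ltW B0) h.
  rewrite mulfV ?gt_eqF //.
  nra.
have hpos : 0 < (1 - pi) * X + pi * Y.
  have h1 : (1 - pi) * (1 + t * b) * (t * a) <= (1 - pi) * (1 + t * b) * ((1 + t * a) * X).
    apply: ler_wpM2l => //; apply: mulr_ge0; lra.
  have h2 : pi * (1 + t * a) * (t * b) <= pi * (1 + t * a) * ((1 + t * b) * Y).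
    apply: ler_wpM2l => //; apply: mulr_ge0; lra.
  have h3 : (1 - pi) * (1 + t * b) * (t * a) + pi * (1 + t * a) * (t * b)
          = t * (c + t * (a * b)) by rewrite /c; ring.
  have h4 : 0 < t * (c + t * (a * b)) by apply: mulr_gt0.
  have h5 : (1 - pi) * (1 + t * b) * ((1 + t * a) * X) + pi * (1 + t * a) * ((1 + t * b) * Y)
          = ((1 - pi) * X + pi * Y) * ((1 + t * a) * (1 + t * b)) by ring.
  have AB0 : 0 < (1 + t * a) * (1 + t * b) by apply: mulr_gt0.
  rewrite ltNge; apply/negP => hle.
  have : ((1 - pi) * X + pi * Y) * ((1 + t * a) * (1 + t * b)) <= 0.
    by apply: mulr_le0_ge0 => //; lra.
  lra.
case: Sp' => _ [_ [g [ug [g1 g2]]]].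
have upi : (@unit_interval R) pi by rewrite /unit_interval /=; apply/andP; split; lra.
have := Hprop pi g upi ug.
rewrite hx0 hy0 => H.
have H2 : (pi%:E * lam g true + (1 - pi)%:E * lam g false
          <= pi%:E * p'.2%:E + (1 - pi)%:E * p'.1%:E)%E.
  apply: leeD; apply: lee_wpmul2l => //; rewrite lee_fin; lra.
have := le_trans H H2.
rewrite -!EFinM -!EFinD lee_fin => H3.
have : X * (1 - pi) + Y * pi = eta * (((1 - pi) * x0 + pi * y0) - ((1 - pi) * p'.1 + pi * p'.2)).
  by rewrite /X /Y; ring.
nra.
Qed.


Lemma bwd_interior (eta : R) (lam : R -> bool -> \bar R) (pi alpha beta : R) :
  0 < eta -> 0 < pi < 1 ->
  lies_northeast (superprediction lam) (shifted_curve eta alpha beta) ->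
  forall p, superprediction lam p ->
  (1 - pi) * (alpha + (pi_point eta pi).1) + pi * (beta + (pi_point eta pi).2)
   <= (1 - pi) * p.1 + pi * p.2.
Proof.
move=> eta0 hpi hNE p Sp.
have /andP[p0 p1] := hpi.
have [q cq nq] := hNE p Sp.
have := curve_S eta alpha beta p q eta0 cq nq.
have ea := exp_alpha eta pi (alpha + (pi_point eta pi).1) p.1 eta0 hpi.
have eb := exp_beta eta pi (beta + (pi_point eta pi).2) p.2 eta0 hpi.
rewrite addrK in ea; rewrite addrK in eb.
rewrite ea eb => hS.
have := jensen pi _ _ _ hS.
have : 0 <= pi <= 1 by apply/andP; split; lra.
move=> h /(_ h).
set x0 := alpha + _; set y0 := beta + _.
nra.
Qed.

Lemma fin_ex (x : \bar R) : x \is a fin_num -> exists r, x = r%:E.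
Proof. by move=> h; exists (fine x); rewrite fineK. Qed.

Lemma endpoint0 (f g : R -> \bar R) : NP f ->
  (forall x, (@unit_interval R) x -> (0 <= f x)%E /\ (0 <= g x)%E) ->
  (forall x, 0 < x < 1 -> f x \is a fin_num /\ g x \is a fin_num) ->
  (forall x y, 0 < x < 1 -> 0 < y < 1 ->
     ((1 - x)%:E * f x + x%:E * g x <= (1 - x)%:E * f y + x%:E * g y)%E) ->
  forall y, (@unit_interval R) y -> (f 0%R <= f y)%E.
Proof.
move=> hNP hnn hfin hIF.
have u0 : (@unit_interval R) 0 by rewrite /unit_interval /=; apply/andP; split; lra.
have u1 : (@unit_interval R) 1 by rewrite /unit_interval /=; apply/andP; split; lra.
have step1 : forall y, 0 < y < 1 -> (f 0%R <= f y)%E.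
  move=> y hy.
  have [[x' ex] [y' ey]] : (exists r, f y = r%:E) /\ (exists r, g y = r%:E).
    by have [h1 h2] := hfin y hy; split; apply: fin_ex.
  have uy : (@unit_interval R) y by move: hy => /andP[? ?]; apply/andP; split; lra.
  have [_ ] := hnn y uy; rewrite ey lee_fin => y'0.
  rewrite ex leNgt; apply/negP => /between [c [xc cf]].
  have [d d0 hd] := hNP 0 [set z | (c%:E < z)%E] u0 (@open_ereal_gt_ereal _ _) cf.
  set eps := c - x'.
  have eps0 : 0 < eps by rewrite /eps; lra.
  set m := d / (d + 1).
  have md : m * (d + 1) = d by rewrite /m; field; rewrite gt_eqF //; lra.
  have m0 : 0 < m by apply: divr_gt0; lra.
  have m1 : m < 1 by nra.
  have mlt : m < d by nra.
  set x := m * eps / (2 * (y' + eps)).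
  have hx : x * (2 * (y' + eps)) = m * eps by rewrite /x; field; rewrite gt_eqF //; lra.
  have x0 : 0 < x by rewrite /x; apply: divr_gt0; [apply: mulr_gt0 | lra].
  have xy0 : 0 <= x * y' by apply: mulr_ge0; lra.
  have xle : x <= m / 2.
    have : x * eps <= m * eps / 2 by lra.
    move=> h; rewrite leNgt; apply/negP => h'.
    have : m / 2 * eps < x * eps by rewrite ltr_pM2r.
    lra.
  have hx1 : 0 < x < 1 by apply/andP; split; lra.
  have ux : (@unit_interval R) x by apply/andP; split; lra.
  have := hd x _ ux; rewrite /= sub0r normrN gtr0_norm // => hcfx.
  have cfx := hcfx ltac:(lra).
  have [[r er] [s es]] : (exists r, f x = r%:E) /\ (exists r, g x = r%:E).
    by have [h1 h2] := hfin x hx1; split; apply: fin_ex.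
  have [_ ] := hnn x ux; rewrite es lee_fin => s0.
  rewrite er lte_fin in cfx.
  have := hIF x y hx1 hy.
  rewrite er es ex ey -!EFinM -!EFinD lee_fin => H.
  have h1 : (1 - x) * c < (1 - x) * r by rewrite ltr_pM2l; lra.
  have h2 : 0 <= x * s by apply: mulr_ge0; lra.
  have h3 : m * eps < eps by rewrite -[X in _ < X]mul1r ltr_pM2r.
  have h4 : (1 - x) * c - (1 - x) * x' = (1 - x) * eps by rewrite /eps; ring.
  have h5 : (1 - x) * eps + x * (y' + eps) = eps + x * y' by ring.
  have h6 : x * (y' + eps) = m * eps / 2 by rewrite -hx; field.
  lra.
move=> y /andP[y0 y1].
case: (ltgtP y 0) => [hy|hy|<-]; [exfalso; lra| |by []].
case: (ltgtP y 1) => [hy1|hy1|->]; [by apply: step1; apply/andP; split|exfalso; lra|].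
case e1 : (f 1) => [r| |]; last 2 first.
- exact: leey.
- by have [h _] := hnn 1 u1; rewrite e1 in h.
rewrite leNgt; apply/negP => /between [c [rc cf]].
have Pf1 : [set z | (z < c%:E)%E] (f 1) by rewrite /= e1 lte_fin.
have [d d0 hd] := hNP 1 [set z | (z < c%:E)%E] u1 (@open_ereal_lt_ereal _ _) Pf1.
set m := d / (d + 1).
have md : m * (d + 1) = d by rewrite /m; field; rewrite gt_eqF //; lra.
have m0 : 0 < m by apply: divr_gt0; lra.
have m1 : m < 1 by nra.
have mlt : m < d by nra.
have hx1 : 0 < 1 - m < 1 by apply/andP; split; lra.
have ux : (@unit_interval R) (1 - m) by apply/andP; split; lra.
have := hd (1 - m) _ ux.
have -> : 1 - (1 - m) = m by ring.
rewrite gtr0_norm // => /(_ mlt) /= hlt.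
have := step1 _ hx1.
move=> hle.
have := lt_le_trans cf hle.
by rewrite (lt_gtF hlt).
Qed.


End H.
Arguments NP {R}.
Arguments cont_NP {R}.
Arguments NP_flip {R}.
Arguments between {R}.
Arguments curve_of {R}.
Arguments curve_S {R}.
Arguments jensen {R}.
Arguments exp_alpha {R}.
Arguments exp_beta {R}.
Arguments wsum_infty {R}.
Arguments fwd_core {R}.
Arguments bwd_interior {R}.
Arguments fin_ex {R}.
Arguments endpoint0 {R}.

Lemma unitI (R : realType) (x : R) : 0 < x < 1 -> (@unit_interval R) x.
Proof. by move=> /andP[? ?]; apply/andP; split; lra. Qed.

Lemma fin_of (R : realType) (x : \bar R) : (0 <= x)%E -> x <> +oo%E -> exists r, x = r%:E /\ 0 <= r.
Proof. by case: x => [r| |] // h _; exists r; split. Qed.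

Arguments unitI {R}.
Arguments fin_of {R}.

Theorem lemma2 (R : realType) (eta : R) (lam : R -> bool -> \bar R) :
  0 < eta -> is_loss lam -> mixable eta lam ->
  (proper_loss lam <->
   forall pi : R, 0 < pi < 1 ->
     exists alpha beta : R,
       lam pi false = (alpha + (pi_point eta pi).1)%:E /\
       lam pi true = (beta + (pi_point eta pi).2)%:E /\
       lies_northeast (superprediction lam) (shifted_curve eta alpha beta)).
Proof.
move=> eta0 Hloss Hmix.
have [Hnn [Hc0 [Hc1 [[g0 [ug0 [fg0 fg1]]] Hnot]]]] := Hloss.
split.
- move=> Hprop pi hpi.
  have upi := unitI _ hpi.
  have [r0 e0] := fin_ex _ fg0; have [r1 e1] := fin_ex _ fg1.
  have Hinf : ~ (lam pi true = +oo%E \/ lam pi false = +oo%E).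
    move=> hinf.
    have := Hprop pi g0 upi ug0.
    rewrite (wsum_infty _ _ _ hpi (Hnn _ _ upi) (Hnn _ _ upi) hinf) e0 e1.
    by rewrite -!EFinM -!EFinD leye_eq.
  have [x0 [ex0 x00]] : exists r, lam pi false = r%:E /\ 0 <= r.
    by apply: fin_of; [exact: Hnn | move=> h; apply: Hinf; right].
  have [y0 [ey0 y00]] : exists r, lam pi true = r%:E /\ 0 <= r.
    by apply: fin_of; [exact: Hnn | move=> h; apply: Hinf; left].
  exists (x0 - (pi_point eta pi).1), (y0 - (pi_point eta pi).2).
  split; first by rewrite subrK.
  split; first by rewrite subrK.
  move=> p Sp; apply: curve_of => //.
  rewrite exp_alpha // exp_beta //.
  exact: (fwd_core _ _ _ _ _ eta0 hpi Hprop Hmix ex0 ey0 x00 y00).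
- move=> HNE.
  have Hfin : forall x, 0 < x < 1 -> lam x false \is a fin_num /\ lam x true \is a fin_num.
    by move=> x hx; have [a [b [-> [-> _]]]] := HNE x hx.
  have Hint : forall pi pi', 0 < pi < 1 -> (@unit_interval R) pi' ->
      (pi%:E * lam pi true + (1 - pi)%:E * lam pi false
        <= pi%:E * lam pi' true + (1 - pi)%:E * lam pi' false)%E.
    move=> pi pi' hpi upi'.
    have [al [be [e0 [e1 hne]]]] := HNE pi hpi.
    have n1 := Hnn pi' true upi'; have n0 := Hnn pi' false upi'.
    case: (EM (lam pi' true = +oo%E \/ lam pi' false = +oo%E)) => hinf.
      by rewrite (wsum_infty _ _ _ hpi n1 n0 hinf) leey.
    have [r1 [er1 r10]] : exists r, lam pi' true = r%:E /\ 0 <= r.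
      by apply: fin_of => // h; apply: hinf; left.
    have [r0 [er0 r00]] : exists r, lam pi' false = r%:E /\ 0 <= r.
      by apply: fin_of => // h; apply: hinf; right.
    have Sp : superprediction lam (r0, r1).
      split => //; split => //; exists pi'; split => //.
      by rewrite er0 er1.
    have := bwd_interior _ _ _ _ _ eta0 hpi hne _ Sp.
    rewrite e0 e1 er0 er1 -!EFinM -!EFinD lee_fin /=.
    lra.
  have u0 : (@unit_interval R) 0 by apply/andP; split; lra.
  have u1 : (@unit_interval R) 1 by apply/andP; split; lra.
  move=> pi pi' upi upi'.
  have /andP[pa pb] := upi.
  case: (ltgtP pi 0) => [hp0|hp0|->]; first (exfalso; lra).
    case: (ltgtP pi 1) => [hp1|hp1|->]; first by apply: Hint => //; apply/andP.
      exfalso; lra.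
    rewrite subrr !mul0e !adde0 !mul1e.
    suff key : (lam (1 - 0)%R true <= lam (1 - (1 - pi'))%R true)%E.
      have e : 1 - (1 - pi') = pi' by ring.
      by move: key; rewrite e subr0.
    apply: (@endpoint0 R (fun x => lam (1 - x) true) (fun x => lam (1 - x) false)
      (NP_flip _ (cont_NP _ Hc1))).
    + move=> x ux.
      have ux' : (@unit_interval R) (1 - x) by move: ux => /andP[? ?]; apply/andP; split; lra.
      by split; apply: Hnn.
    + move=> x hx.
      have hx' : 0 < 1 - x < 1 by move: hx => /andP[? ?]; apply/andP; split; lra.
      by have [? ?] := Hfin _ hx'; split.
    + move=> x y hx hy.
      have hx' : 0 < 1 - x < 1 by move: hx => /andP[? ?]; apply/andP; split; lra.
      have hy' : 0 < 1 - y < 1 by move: hy => /andP[? ?]; apply/andP; split; lra.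
      have := Hint _ _ hx' (unitI _ hy').
      by have -> : 1 - (1 - x) = x by ring.
    + by move: upi' => /andP[? ?]; apply/andP; split; lra.
  rewrite subr0 !mul0e !add0e !mul1e.
  apply: (@endpoint0 R (fun x => lam x false) (fun x => lam x true) (cont_NP _ Hc0)) => //.
  + by move=> x ux; split; apply: Hnn.
  + move=> x y hx hy.
    by rewrite addeC [X in (_ <= X)%E]addeC; apply: Hint => //; apply: (unitI _).
Qed.
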